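(* Let $\mathcal{A}$ be a finite set, $B\ge0$ an integer, $\mathfrak{F}:\mathcal{A}^{\mathbb{Z}}\to\mathcal{A}^{\mathbb{Z}}$ a cellular automaton with neighbourhood $\{-B,\dots,B\}$, and $\phi:\mathcal{A}\to\mathbb{N}$ conserved by $\mathfrak{F}$. Let $\mathbf{a}\in\mathcal{A}^{<\mathbb{Z}}$ and $\mathbf{a}'=\mathfrak{F}(\mathbf{a})$. Then: (1) for every $\mathsf{z}\in\mathbb{Z}$, $\overset{\leftrightarrow}{I}_{\mathsf{z}}(\mathbf{a})=-\big(\phi(a'_{\mathsf{z}})-\phi(a_{\mathsf{z}})\big)$; (2) for every $\mathsf{z}$, $\vec{I}_{\mathsf{z}}(\mathbf{a})$ depends only on $\mathbf{a}|_{\{\mathsf{z}-B,\dots,\mathsf{z}+B\}}$, i.e. if $\mathbf{b}\in\mathcal{A}^{<\mathbb{Z}}$ satisfies $b_{\mathsf{y}}=a_{\mathsf{y}}$ for all $\mathsf{y}\in\{\mathsf{z}-B,\dots,\mathsf{z}+B\}$ then $\vec{I}_{\mathsf{z}}(\mathbf{b})=\vec{I}_{\mathsf{z}}(\mathbf{a})$; (3) for every $\mathsf{z}$: (i) $\vec{I}_{\mathsf{z}}(\mathbf{a})\le\sum_{\mathsf{y}=\mathsf{z}-B}^{\mathsf{z}}\phi(a_{\mathsf{y}})$; (ii) $\vec{I}_{\mathsf{z}}(\mathbf{a})\le\sum_{\mathsf{y}=\mathsf{z}}^{\mathsf{z}+B}\phi(a'_{\mathsf{y}})$; (iii) $\overset{\leftharpoonup}{I}_{\mathsf{z}}(\mathbf{a})\le\sum_{\mathsf{y}=\mathsf{z}}^{\mathsf{z}+B}\phi(a_{\mathsf{y}})$;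 (iv) $\overset{\leftharpoonup}{I}_{\mathsf{z}}(\mathbf{a})\le\sum_{\mathsf{y}=\mathsf{z}-B}^{\mathsf{z}}\phi(a'_{\mathsf{y}})$.
   Context: The CA is $\mathfrak{F}(\mathbf{a})_{\mathsf{z}}=\mathfrak{f}(a_{\mathsf{z}-B},\dots,a_{\mathsf{z}+B})$. Vacuum states are $\phi^{-1}\{0\}$; $\mathcal{A}^{<\mathbb{Z}}$ is the set of configurations with only finitely many non-vacuum sites; $\phi$ is conserved by $\mathfrak{F}$ if for every $\mathbf{a}\in\mathcal{A}^{<\mathbb{Z}}$, $\mathfrak{F}(\mathbf{a})\in\mathcal{A}^{<\mathbb{Z}}$ and $\sum_{\mathsf{z}}\phi(\mathfrak{F}(\mathbf{a})_{\mathsf{z}})=\sum_{\mathsf{z}}\phi(a_{\mathsf{z}})$. Flux: for $\mathbf{a}\in\mathcal{A}^{<\mathbb{Z}}$, $\mathbf{a}'=\mathfrak{F}(\mathbf{a})$, $\vec{I}_{\mathsf{z}}(\mathbf{a})=\sum_{\mathsf{y}\le\mathsf{z}}\phi(a_{\mathsf{y}})-\sum_{\mathsf{y}\le\mathsf{z}}\phi(a'_{\mathsf{y}})$ (which by conservation also equals $\sum_{\mathsf{y}>\mathsf{z}}\phi(a'_{\mathsf{y}})-\sum_{\mathsf{y}>\mathsf{z}}\phi(a_{\mathsf{y}})$); $\overset{\leftharpoonup}{I}_{\mathsf{z}}(\mathbf{a})=-\vec{I}_{\mathsf{z}-1}(\mathbf{a})$; $\overset{\leftrightarrow}{I}_{\mathsf{z}}(\mathbf{a})=\overset{\leftharpoonup}{I}_{\mathsf{z}}(\mathbf{a})+\vec{I}_{\mathsf{z}}(\mathbf{a})$.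 *)

(* Defs.v *)
From mathcomp Require Import all_boot all_order all_algebra.
From Stdlib Require Import ClassicalEpsilon.
Set Implicit Arguments. Unset Strict Implicit. Unset Printing Implicit Defensive.
Import Order.TTheory GRing.Theory Num.Theory.
Local Open Scope ring_scope.

Definition CA (A : finType) (B : nat) (f : {ffun 'I_(B + B).+1 -> A} -> A)
  (a : int -> A) : int -> A :=
  fun z => f [ffun i : 'I_(B + B).+1 => a (z - B%:Z + (i : nat)%:Z)].

(* a is in A^{<Z}: only finitely many non-vacuum sites (vacuum = phi^-1{0}). *)
Definition fin_supp (A : Type) (phi : A -> nat) (a : int -> A) : Prop :=
  exists N : nat, forall y : int, (N%:Z < `|y|)%R -> phi (a y) = 0%N.

(* Sum of an eventually-zero nat sequence: sum up to a (chosen) index after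
   which all terms vanish.  Only meaningful for eventually-zero u. *)
Definition ez_sum (u : nat -> nat) : nat :=
  let N := epsilon (inhabits 0%N) (fun N => forall k, (N <= k)%N -> u k = 0%N) in
  (\sum_(k < N) u k)%N.

Definition lsum (A : Type) (phi : A -> nat) (a : int -> A) (z : int) : nat :=
  ez_sum (fun k => phi (a (z - k%:Z))).

Definition rsum (A : Type) (phi : A -> nat) (a : int -> A) (z : int) : nat :=
  ez_sum (fun k => phi (a (z + 1 + k%:Z))).

Definition total (A : Type) (phi : A -> nat) (a : int -> A) : nat :=
  (lsum phi a 0 + rsum phi a 0)%N.

Definition conserved (A : Type) (F : (int -> A) -> (int -> A)) (phi : A -> nat) : Prop :=
  forall a, fin_supp phi a -> fin_supp phi (F a) /\ total phi (F a) = total phi a.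

Definition flux_r (A : Type) (F : (int -> A) -> (int -> A)) (phi : A -> nat)
  (a : int -> A) (z : int) : int :=
  (lsum phi a z)%:Z - (lsum phi (F a) z)%:Z.

Definition flux_l (A : Type) (F : (int -> A) -> (int -> A)) (phi : A -> nat)
  (a : int -> A) (z : int) : int :=
  - flux_r F phi a (z - 1).

Definition flux_lr (A : Type) (F : (int -> A) -> (int -> A)) (phi : A -> nat)
  (a : int -> A) (z : int) : int :=
  flux_l F phi a z + flux_r F phi a z.

(* Main.v *)
Require Import Defs.
From mathcomp Require Import all_boot all_order all_algebra zify.
From Stdlib Require Import ClassicalEpsilon FunctionalExtensionality.
Import Order.TTheory GRing.Theory Num.Theory.
Local Open Scope ring_scope.

Lemma sum_tail (u : nat -> nat) (N M : nat) :
  (forall k, (N <= k)%N -> u k = 0%N) -> (N <= M)%N ->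
  (\sum_(k < M) u k)%N = (\sum_(k < N) u k)%N.
Proof.
move=> H le; rewrite -!(big_mkord xpredT) (@big_cat_nat _ _ _ N 0 M _ _ (leq0n N) le) /=.
rewrite [X in (_ + X)%N]big1_seq ?addn0 // => k /andP[_].
by rewrite mem_index_iota => /andP[h _]; apply: H.
Qed.
Arguments sum_tail {u N M}.

Lemma ez_sumE (u : nat -> nat) (N : nat) :
  (forall k, (N <= k)%N -> u k = 0%N) -> forall M, (N <= M)%N ->
  ez_sum u = (\sum_(k < M) u k)%N.
Proof.
move=> H M le; rewrite /ez_sum.
set P := (fun N0 : nat => forall k : nat, (N0 <= k)%N -> u k = 0%N).
have hex : exists N0, P N0 by exists N.
have := epsilon_spec (inhabits 0%N) P hex.
set N0 := epsilon _ _ => HN0.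
have HM : forall k, (M <= k)%N -> u k = 0%N.
  by move=> k hk; apply: H; apply: leq_trans hk.
rewrite -(sum_tail HN0 (leq_maxl N0 M)).
by rewrite (sum_tail HM (leq_maxr N0 M)).
Qed.
Arguments ez_sumE {u N}.

Lemma fs_bound (A : Type) (phi : A -> nat) (a : int -> A) (z0 : int) :
  fin_supp phi a -> exists K : nat, forall k : nat, (K <= k)%N ->
    phi (a (z0 - k%:Z)) = 0%N /\ phi (a (z0 + k%:Z)) = 0%N.
Proof.
case=> N HN; exists (N + `|z0|%N).+1 => k hk; split; apply: HN; lia.
Qed.
Arguments fs_bound {A phi a}.

Lemma lsum_step (A : Type) (phi : A -> nat) (a : int -> A) (z : int) :
  fin_supp phi a -> lsum phi a z = (phi (a z) + lsum phi a (z - 1))%N.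
Proof.
move=> Ha; have [K HK] := fs_bound z Ha.
have H1 : forall k, (K <= k)%N -> phi (a (z - k%:Z)) = 0%N by move=> k /HK[].
have H2 : forall k, (K <= k)%N -> phi (a (z - 1 - k%:Z)) = 0%N.
  by move=> k hk; have [h _] := HK k.+1 (leqW hk); rewrite -h; congr (phi (a _)); lia.
rewrite /lsum (ez_sumE H1 _ (leqnSn K)) (ez_sumE H2 _ (leqnn K)).
rewrite big_ord_recl /= subr0; congr (_ + _)%N.
by apply: eq_bigr => i _; congr (phi (a _)); rewrite /bump /=; lia.
Qed.

Lemma rsum_step (A : Type) (phi : A -> nat) (a : int -> A) (z : int) :
  fin_supp phi a -> rsum phi a (z - 1) = (phi (a z) + rsum phi a z)%N.
Proof.
move=> Ha; have [K HK] := fs_bound z Ha.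
have H1 : forall k, (K <= k)%N -> phi (a (z - 1 + 1 + k%:Z)) = 0%N.
  by move=> k /HK[_ h]; rewrite -h; congr (phi (a _)); lia.
have H2 : forall k, (K <= k)%N -> phi (a (z + 1 + k%:Z)) = 0%N.
  by move=> k hk; have [_ h] := HK k.+1 (leqW hk); rewrite -h; congr (phi (a _)); lia.
rewrite /rsum (ez_sumE H1 _ (leqnSn K)) (ez_sumE H2 _ (leqnn K)).
rewrite big_ord_recl /=; congr (_ + _)%N.
  by congr (phi (a _)); lia.
by apply: eq_bigr => i _; congr (phi (a _)); rewrite /bump /=; lia.
Qed.
Arguments lsum_step {A phi a}.
Arguments rsum_step {A phi a}.

Lemma tot_inv (A : Type) (phi : A -> nat) (a : int -> A) :
  fin_supp phi a -> forall z, (lsum phi a z + rsum phi a z)%N = Defs.total phi a.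
Proof.
move=> Ha.
have step : forall z, (lsum phi a z + rsum phi a z)%N = (lsum phi a (z - 1) + rsum phi a (z - 1))%N.
  by move=> z; rewrite (lsum_step z Ha) (rsum_step z Ha); lia.
have H : forall n : nat, (lsum phi a n%:Z + rsum phi a n%:Z)%N = Defs.total phi a /\
   (lsum phi a (- n%:Z) + rsum phi a (- n%:Z))%N = Defs.total phi a.
  elim=> [|n [IH1 IH2]]; first by rewrite oppr0.
  split.
    by rewrite step; have -> : (n.+1%:Z - 1 = n%:Z) by lia.
  have -> : (- n.+1%:Z = - n%:Z - 1) by lia.
  by rewrite -step.
by case=> n; [exact: (H n).1 | rewrite NegzE; exact: (H n.+1).2].
Qed.
Arguments tot_inv {A phi a}.

Lemma flux_alt (A : finType) (B : nat) (f : {ffun 'I_(B + B).+1 -> A} -> A)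
  (phi : A -> nat) (Hcons : conserved (CA f) phi) (a : int -> A) z :
  fin_supp phi a ->
  flux_r (CA f) phi a z = (rsum phi (CA f a) z)%:Z - (rsum phi a z)%:Z.
Proof.
move=> Ha; have [Ha' Ht] := Hcons a Ha.
have h1 := tot_inv Ha z; have h2 := tot_inv Ha' z.
rewrite /flux_r; lia.
Qed.

Lemma lsum_ext (A : Type) (phi : A -> nat) (x x' : int -> A) z :
  (forall y, y <= z -> x y = x' y) -> lsum phi x z = lsum phi x' z.
Proof.
move=> H; rewrite /lsum; congr ez_sum; apply: functional_extensionality => k.
by rewrite H //; lia.
Qed.

Lemma rsum_ext (A : Type) (phi : A -> nat) (x x' : int -> A) z :
  (forall y, z < y -> x y = x' y) -> rsum phi x z = rsum phi x' z.
Proof.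
move=> H; rewrite /rsum; congr ez_sum; apply: functional_extensionality => k.
by rewrite H //; lia.
Qed.

Lemma CA_up (A : finType) (B : nat) (f : {ffun 'I_(B + B).+1 -> A} -> A)
  (x x' : int -> A) lo :
  (forall y, lo <= y -> x y = x' y) -> forall y, lo + B%:Z <= y -> CA f x y = CA f x' y.
Proof.
move=> H y hy; rewrite /CA; congr f; apply/ffunP => i; rewrite !ffunE H //; lia.
Qed.

Lemma CA_down (A : finType) (B : nat) (f : {ffun 'I_(B + B).+1 -> A} -> A)
  (x x' : int -> A) hi :
  (forall y, y <= hi -> x y = x' y) -> forall y, y <= hi - B%:Z -> CA f x y = CA f x' y.
Proof.
move=> H y hy; rewrite /CA; congr f; apply/ffunP => i; rewrite !ffunE H //.
have := ltn_ord i; lia.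
Qed.
Arguments flux_alt {A B f phi} Hcons {a z}.
Arguments lsum_ext {A phi x x' z}.
Arguments rsum_ext {A phi x x' z}.
Arguments CA_up {A B f x x' lo}.
Arguments CA_down {A B f x x' hi}.

Lemma fs_merge (A : Type) (phi : A -> nat) (x x' : int -> A) (P : int -> bool) :
  fin_supp phi x -> fin_supp phi x' -> fin_supp phi (fun y => if P y then x y else x' y).
Proof.
move=> [N1 H1] [N2 H2]; exists (maxn N1 N2) => y hy.
case: (P y); [apply: H1 | apply: H2]; lia.
Qed.

Lemma loc_sharp (A : finType) (B : nat) (f : {ffun 'I_(B + B).+1 -> A} -> A)
  (phi : A -> nat) (Hcons : conserved (CA f) phi) (a b : int -> A) z :
  fin_supp phi a -> fin_supp phi b ->
  (forall y, z - B%:Z + 1 <= y <= z + B%:Z -> b y = a y) ->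
  flux_r (CA f) phi b z = flux_r (CA f) phi a z.
Proof.
move=> Ha Hb Hab.
pose c := fun y => if y <= z + B%:Z then a y else b y.
have Hc : fin_supp phi c by apply: fs_merge.
have ca : forall y, y <= z + B%:Z -> c y = a y by move=> y hy; rewrite /c hy.
have cb : forall y, z - B%:Z + 1 <= y -> c y = b y.
  move=> y hy; rewrite /c; case: ifP => // hy2; symmetry; apply: Hab; lia.
have e1 : flux_r (CA f) phi c z = flux_r (CA f) phi a z.
  rewrite /flux_r (lsum_ext (x:=c) (x':=a)); last by move=> y hy; apply: ca; lia.
  rewrite (lsum_ext (x:=CA f c) (x':=CA f a)) //.
  move=> y hy; apply: (CA_down ca); lia.
rewrite -e1 (flux_alt Hcons Hb) (flux_alt Hcons Hc).
rewrite (rsum_ext (x:=c) (x':=b)); last by move=> y hy; apply: cb; lia.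
rewrite (rsum_ext (x:=CA f c) (x':=CA f b)) //.
move=> y hy; apply: (CA_up cb); lia.
Qed.
Arguments loc_sharp {A B f phi} Hcons {a b z}.
Arguments fs_merge {A phi x x'}.

Lemma Posz_sum (n : nat) (F : nat -> nat) :
  ((\sum_(k < n) F k)%N)%:Z = \sum_(k < n) (F k)%:Z.
Proof.
elim: n => [|n IH]; first by rewrite !big_ord0.
by rewrite !big_ord_recr /= PoszD IH.
Qed.

Lemma sum_rev (B : nat) (g : int -> int) (c : int) :
  \sum_(k < B) g (c - k%:Z) = \sum_(k < B) g (c - B%:Z + 1 + k%:Z).
Proof.
rewrite (reindex_inj rev_ord_inj); apply: eq_bigr => i _; congr g; have := ltn_ord i; rewrite /=; lia.
Qed.

Lemma sum_le_S (B : nat) (g : nat -> nat) :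
  \sum_(k < B) (g k)%:Z <= \sum_(k < B.+1) (g k)%:Z.
Proof. by rewrite big_ord_recr /= lerDl. Qed.

Lemma vacuum (A : Type) (phi : A -> nat) (a : int -> A) :
  fin_supp phi a -> exists v, phi v = 0%N.
Proof. by move=> Ha; have [K /(_ K (leqnn K)) [h _]] := fs_bound 0 Ha; eexists; exact: h. Qed.
Arguments vacuum {A phi a}.

Lemma fs_const (A : Type) (phi : A -> nat) v : phi v = 0%N -> fin_supp phi (fun _ => v).
Proof. by move=> h; exists 0%N. Qed.

Lemma bound_r (A : finType) (B : nat) (f : {ffun 'I_(B + B).+1 -> A} -> A)
  (phi : A -> nat) (Hcons : conserved (CA f) phi) (a : int -> A) w :
  fin_supp phi a ->
  flux_r (CA f) phi a w <= \sum_(k < B) (phi (a (w - k%:Z)))%:Z.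
Proof.
move=> Ha; have [v hv] := vacuum Ha.
pose c := fun y => if y <= w - B%:Z then v else a y.
have Hc : fin_supp phi c by apply: fs_merge => //; apply: fs_const.
rewrite -(loc_sharp Hcons Ha Hc); last first.
  by move=> y hy; rewrite /c; case: ifP => // h; lia.
have -> : \sum_(k < B) (phi (a (w - k%:Z)))%:Z = (lsum phi c w)%:Z.
  have H0 : forall k, (B <= k)%N -> phi (c (w - k%:Z)) = 0%N.
    by move=> k hk; rewrite /c ifT //; lia.
  rewrite /lsum (ez_sumE H0 _ (leqnn B)) (Posz_sum B (fun k => phi (c (w - k%:Z)))); apply: eq_bigr => i _.
  by rewrite /c ifF //; have := ltn_ord i; lia.
rewrite /flux_r; lia.
Qed.

Lemma bound_l (A : finType) (B : nat) (f : {ffun 'I_(B + B).+1 -> A} -> A)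
  (phi : A -> nat) (Hcons : conserved (CA f) phi) (a : int -> A) w :
  fin_supp phi a ->
  - flux_r (CA f) phi a w <= \sum_(k < B) (phi (a (w + 1 + k%:Z)))%:Z.
Proof.
move=> Ha; have [v hv] := vacuum Ha.
pose c := fun y => if y <= w + B%:Z then a y else v.
have Hc : fin_supp phi c by apply: fs_merge => //; apply: fs_const.
rewrite -(loc_sharp Hcons Ha Hc); last first.
  by move=> y hy; rewrite /c; case: ifP => // h; lia.
have -> : \sum_(k < B) (phi (a (w + 1 + k%:Z)))%:Z = (rsum phi c w)%:Z.
  have H0 : forall k, (B <= k)%N -> phi (c (w + 1 + k%:Z)) = 0%N.
    by move=> k hk; rewrite /c ifF //; lia.
  rewrite /rsum (ez_sumE H0 _ (leqnn B)) (Posz_sum B (fun k => phi (c (w + 1 + k%:Z)))); apply: eq_bigr => i _.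
  by rewrite /c ifT //; have := ltn_ord i; lia.
rewrite (flux_alt Hcons Hc); lia.
Qed.

Lemma flux_step (A : finType) (B : nat) (f : {ffun 'I_(B + B).+1 -> A} -> A)
  (phi : A -> nat) (Hcons : conserved (CA f) phi) (a : int -> A) w :
  fin_supp phi a ->
  flux_r (CA f) phi a w = flux_r (CA f) phi a (w - 1) + (phi (a w))%:Z - (phi (CA f a w))%:Z.
Proof.
move=> Ha; have [Ha' _] := Hcons a Ha.
rewrite /flux_r (lsum_step w Ha) (lsum_step w Ha'); lia.
Qed.
Arguments flux_step {A B f phi} Hcons {a} w.

Lemma flux_tele (A : finType) (B : nat) (f : {ffun 'I_(B + B).+1 -> A} -> A)
  (phi : A -> nat) (Hcons : conserved (CA f) phi) (a : int -> A) w :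
  fin_supp phi a -> forall n : nat,
  flux_r (CA f) phi a (w + n%:Z) = flux_r (CA f) phi a w +
    \sum_(k < n) ((phi (a (w + 1 + k%:Z)))%:Z - (phi (CA f a (w + 1 + k%:Z)))%:Z).
Proof.
move=> Ha; elim=> [|n IH]; first by rewrite big_ord0 !addr0.
rewrite big_ord_recr /= (flux_step Hcons _ Ha).
have -> : w + n.+1%:Z - 1 = w + n%:Z by lia.
have -> : w + 1 + n%:Z = w + n.+1%:Z by lia.
by rewrite IH !addrA.
Qed.
Arguments flux_tele {A B f phi} Hcons {a} w. Arguments bound_r {A B f phi} Hcons {a} w. Arguments bound_l {A B f phi} Hcons {a} w.

Theorem proposition12 (A : finType) (B : nat)
  (f : {ffun 'I_(B + B).+1 -> A} -> A) (phi : A -> nat)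
  (Hcons : conserved (CA f) phi)
  (a : int -> A) (Ha : fin_supp phi a) :
  let a' := CA f a in
  (* (1) *)
  (forall z : int,
     flux_lr (CA f) phi a z = - ((phi (a' z))%:Z - (phi (a z))%:Z)) /\
  (* (2) *)
  (forall z : int, forall b : int -> A, fin_supp phi b ->
     (forall y : int, z - B%:Z <= y <= z + B%:Z -> b y = a y) ->
     flux_r (CA f) phi b z = flux_r (CA f) phi a z) /\
  (* (3) *)
  (forall z : int,
     flux_r (CA f) phi a z <= \sum_(k < B.+1) (phi (a (z - k%:Z)))%:Z /\
     flux_r (CA f) phi a z <= \sum_(k < B.+1) (phi (a' (z + k%:Z)))%:Z /\
     flux_l (CA f) phi a z <= \sum_(k < B.+1) (phi (a (z + k%:Z)))%:Z /\
     flux_l (CA f) phi a z <= \sum_(k < B.+1) (phi (a' (z - k%:Z)))%:Z).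
Proof.
move=> a'; split; [|split].
- move=> z; rewrite /flux_lr /flux_l (flux_step Hcons z Ha) /a'; lia.
- move=> z b Hb Hab; apply: (loc_sharp Hcons Ha Hb) => y hy; apply: Hab; lia.
move=> z; split; [|split; [|split]].
- apply: le_trans (bound_r Hcons z Ha) _.
  exact: (sum_le_S B (fun k => phi (a (z - k%:Z)))).
- have T := flux_tele Hcons z Ha B.
  have Br := bound_r Hcons (z + B%:Z) Ha.
  rewrite (sum_rev B (fun y => (phi (a y))%:Z)) in Br.
  have {}T : flux_r (CA f) phi a (z + B%:Z) = flux_r (CA f) phi a z +
    \sum_(k < B) (phi (a (z + 1 + k%:Z)))%:Z - \sum_(k < B) (phi (a' (z + 1 + k%:Z)))%:Z.
    by rewrite T sumrB addrA.
  have E : \sum_(k < B) (phi (a (z + B%:Z - B%:Z + 1 + k%:Z)))%:Z =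
           \sum_(k < B) (phi (a (z + 1 + k%:Z)))%:Z.
    by apply: eq_bigr => i _; congr (Posz (phi (a _))); lia.
  rewrite E in Br.
  have -> : \sum_(k < B.+1) (phi (a' (z + k%:Z)))%:Z =
            (phi (a' z))%:Z + \sum_(k < B) (phi (a' (z + 1 + k%:Z)))%:Z.
    rewrite big_ord_recl /= addr0; congr (_ + _); apply: eq_bigr => i _.
    by congr (Posz (phi (a' _))); rewrite /bump /=; lia.
  lia.
- rewrite /flux_l; have Bl := bound_l Hcons (z - 1) Ha.
  apply: le_trans Bl _.
  have -> : \sum_(k < B) (phi (a (z - 1 + 1 + k%:Z)))%:Z =
            \sum_(k < B) (phi (a (z + k%:Z)))%:Z.
    by apply: eq_bigr => i _; congr (Posz (phi (a _))); lia.
  exact: (sum_le_S B (fun k => phi (a (z + k%:Z)))).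
- rewrite /flux_l.
  have T := flux_tele Hcons (z - 1 - B%:Z) Ha B.
  have {}T : flux_r (CA f) phi a (z - 1) = flux_r (CA f) phi a (z - 1 - B%:Z) +
    \sum_(k < B) (phi (a (z - 1 - B%:Z + 1 + k%:Z)))%:Z -
    \sum_(k < B) (phi (a' (z - 1 - B%:Z + 1 + k%:Z)))%:Z.
    by rewrite -addrA -sumrB -T; congr flux_r; lia.
  rewrite T.
  have Bl := bound_l Hcons (z - 1 - B%:Z) Ha.
  have -> : \sum_(k < B.+1) (phi (a' (z - k%:Z)))%:Z =
            (phi (a' z))%:Z + \sum_(k < B) (phi (a' (z - 1 - k%:Z)))%:Z.
    rewrite big_ord_recl /= subr0; congr (_ + _); apply: eq_bigr => i _.
    by congr (Posz (phi (a' _))); rewrite /bump /=; lia.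
  rewrite (sum_rev B (fun y => (phi (a' y))%:Z)).
  have E : \sum_(k < B) (phi (a' (z - 1 - B%:Z + 1 + k%:Z)))%:Z =
           \sum_(k < B) (phi (CA f a (z - 1 - B%:Z + 1 + k%:Z)))%:Z by [].
  rewrite E; lia.
Qed.
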